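(* Let $P$ be an Eulerian poset. Suppose that to every interval $[x,y]$ of $P$ (viewed as an Eulerian poset of rank $\rho(y)-\rho(x)$) a polynomial $B'([x,y];u,v)\in\mathbb{Z}[u,v]$ is assigned such that: (a) $B'([x,x];u,v)=1$ for all $x$; (b) for $x<y$ the degree of $B'([x,y];u,v)$ in $v$ is less than $(\rho(y)-\rho(x))/2$; (c) for all $x\le y$, $$\sum_{x\le z\le y}B'([x,z];u^{-1},v^{-1})(uv)^{\rho(z)-\rho(x)}(v-u)^{\rho(y)-\rho(z)}=\sum_{x\le z\le y}B'([z,y];u,v)(uv-1)^{\rho(z)-\rho(x)}.$$ Then $B'([x,y];u,v)=B([x,y];u,v)$ for all $x\le y$; in particular $B'(P;u,v)=B(P;u,v)$.
   Context: An Eulerian poset is a finite poset with least element $\hat0$, greatest element $\hat1$, all maximal chains of the same length (the rank $d$), rank function $\rho$, and Möbius function $\mu(x,y)=(-1)^{\rho(y)-\rho(x)}$ for $x\le y$; intervals $[x,y]$ are Eulerian of rank $\rho(y)-\rho(x)$. For Eulerian $Q$ of rank $e$: $G(Q,t)=H(Q,t)=1$ if $e=0$; for $e>0$, $H(Q,t)=\sum_{\hat0<x\le\hat1}(t-1)^{\rho(x)-1}G([x,\hat1],t)$, $G(Q,t)=\tau_{<e/2}((1-t)H(Q,t))$ with $\tau_{<r}(\sum a_it^i)=\sum_{i<r}a_it^i$. $B(Q;u,v)\in\mathbb{Z}[u,v]$ is defined by $B=1$ if $e=0$ and for $e>0$ recursively by $\sum_{\hat0\le x\le\hat1}B([\hat0,x];u,v)u^{e-\rho(x)}G([x,\hat1],u^{-1}v)=G(Q,uv)$.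 *)

(* Defs.v *)
From HB Require Import structures.
From mathcomp Require Import all_boot all_order all_algebra fraction.
Set Implicit Arguments. Unset Strict Implicit. Unset Printing Implicit Defensive.
Import Order.TTheory GRing.Theory Num.Theory.
Local Open Scope ring_scope.

(* Bivariate integer polynomials Z[u,v] are represented as {poly {poly int}}:
   the OUTER variable is v, the INNER variable (coefficients) is u.
   So "degree in v" of p is (size p).-1 (and the zero polynomial, of degree
   -infinity, gets size 0).                                                  *)
Notation Zuv := {poly {poly int}}.

(* The field of rational functions Q(u,v) = Frac(Z[u,v]), where we evaluate
   Laurent/rational expressions such as B(u^-1,v^-1) or G(u^-1 v). *)
Notation Kuv := {fraction Zuv}.
Definition uK : Kuv := tofrac ((('X : {poly int})%:P) : Zuv).
Definition vK : Kuv := tofrac ('X : Zuv).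

Definition eval_uv (a b : Kuv) (p : Zuv) : Kuv :=
  (map_poly (fun q : {poly int} => (map_poly (fun c : int => c%:~R) q).[a]) p).[b].

Definition eval_t (p : {poly int}) (a : Kuv) : Kuv :=
  (map_poly (fun c : int => c%:~R) p).[a].

Section Poset.
Context {d : Order.disp_t} {P : finTBPOrderType d}.

Definition covers (x y : P) : bool :=
  (x < y)%O && [forall z : P, ~~ ((x < z)%O && (z < y)%O)].

(* rank function: rho(\hat0)=0 and rho increases by one along covers.
   Existence of such rho is equivalent to all maximal chains having the
   same length (rho \top = rank d). *)
Definition rank_function (rho : P -> nat) : Prop :=
  rho \bot%O = 0%N /\ forall x y : P, covers x y -> rho y = (rho x).+1.

(* Moebius function, by the usual recursion
   mu(x,x)=1, mu(x,y) = - sum_{x<=z<y} mu(x,z) for x<y, 0 otherwise.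
   The fuel #|P| exceeds the length of any chain. *)
Fixpoint mobius_rec (n : nat) (x y : P) : int :=
  match n with
  | 0 => 0
  | n'.+1 =>
    if x == y then 1
    else if (x <= y)%O then
      - \sum_(z : P | (x <= z)%O && (z < y)%O) mobius_rec n' x z
    else 0
  end.
Definition mobius (x y : P) : int := mobius_rec #|P| x y.

Definition eulerian (rho : P -> nat) : Prop :=
  rank_function rho /\
  forall x y : P, (x <= y)%O -> mobius x y = (-1) ^+ (rho y - rho x)%N.

Definition trunc_half (e : nat) (p : {poly int}) : {poly int} :=
  \poly_(i < size p) (if (i.*2 < e)%N then p`_i else 0).

Fixpoint Hrec (rho : P -> nat) (n : nat) (x y : P) : {poly int} :=
  if (rho y - rho x == 0)%N then 1 else
  match n with
  | 0 => 0
  | n'.+1 =>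
    \sum_(z : P | (x < z)%O && (z <= y)%O)
      ('X - 1) ^+ (rho z - rho x)%N.-1 *
      (if (rho y - rho z == 0)%N then 1
       else trunc_half (rho y - rho z)%N ((1 - 'X) * Hrec rho n' z y))
  end.

Definition Hpoly (rho : P -> nat) (x y : P) : {poly int} := Hrec rho #|P| x y.

Definition Gpoly (rho : P -> nat) (x y : P) : {poly int} :=
  if (rho y - rho x == 0)%N then 1
  else trunc_half (rho y - rho x)%N ((1 - 'X) * Hpoly rho x y).

(* B([x,y];u,v), defined in Q(u,v) by solving the defining relation
   sum_{x<=z<=y} B([x,z]) u^{rho y - rho z} G([z,y], u^-1 v) = G([x,y], uv)
   for the (z = y)-term, whose coefficient is u^0 G([y,y]) = 1. *)
Fixpoint Brec (rho : P -> nat) (n : nat) (x y : P) : Kuv :=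
  if (rho y - rho x == 0)%N then 1 else
  match n with
  | 0 => 0
  | n'.+1 =>
    eval_t (Gpoly rho x y) (uK * vK) -
    \sum_(z : P | (x <= z)%O && (z < y)%O)
      Brec rho n' x z * uK ^+ (rho y - rho z)%N * eval_t (Gpoly rho z y) (uK^-1 * vK)
  end.

Definition Bfun (rho : P -> nat) (x y : P) : Kuv := Brec rho #|P| x y.

End Poset.

(* Main.v *)
Require Import Defs.
From HB Require Import structures.
From mathcomp Require Import all_boot all_order all_algebra fraction.
From mathcomp Require Import zify.
Import Order.TTheory GRing.Theory Num.Theory.
Local Open Scope ring_scope.

Definition gm (a : Kuv) : {rmorphism {poly int} -> Kuv} := horner_eval a \o map_poly intr.
Lemma gmE a p : eval_t p a = gm a p. Proof. by []. Qed.
Definition evm (a b : Kuv) : {rmorphism Zuv -> Kuv} := horner_eval b \o map_poly (gm a).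
Lemma evmE a b p : eval_uv a b p = evm a b p. Proof. by []. Qed.

Lemma gmC a (c : int) : gm a c%:P = c%:~R.
Proof. by rewrite /= map_polyC horner_evalE hornerC. Qed.
Lemma gmX a : gm a 'X = a.
Proof. by rewrite /= map_polyX horner_evalE hornerX. Qed.
Lemma evmC a b (c : {poly int}) : evm a b c%:P = gm a c.
Proof. by rewrite /= map_polyC horner_evalE hornerC. Qed.
Lemma evmX a b : evm a b 'X = b.
Proof. by rewrite /= map_polyX horner_evalE hornerX. Qed.

Lemma rmorph_poly_eq (R : nzRingType) (S : nzRingType) (f g : {rmorphism {poly R} -> S}) :
  (forall c, f c%:P = g c%:P) -> f 'X = g 'X -> forall p, f p = g p.
Proof.
move=> hc hX p; rewrite -[p]coefK poly_def !rmorph_sum; apply: eq_bigr => i _.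
by rewrite -mul_polyC !rmorphM !rmorphXn hc hX.
Qed.

Definition tc : {rmorphism {poly int} -> Kuv} := (@tofrac Zuv) \o polyC.

Lemma gm_tc p : gm uK p = tc p.
Proof.
apply: rmorph_poly_eq => [c|]; last by rewrite gmX.
rewrite gmC /= -[c]intz !rmorph_int //.
Qed.

Lemma evm_tofrac p : evm uK vK p = tofrac p.
Proof.
have -> : tofrac p = ((@tofrac Zuv) : {rmorphism Zuv -> Kuv}) p by [].
apply: rmorph_poly_eq => [c|]; last by rewrite evmX.
by rewrite evmC gm_tc.
Qed.

Lemma evm_inj p q : evm uK vK p = evm uK vK q -> p = q.
Proof. by rewrite !evm_tofrac => /eqP; rewrite tofrac_eq => /eqP. Qed.

Lemma gm_inj p q : gm uK p = gm uK q -> p = q.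
Proof. by rewrite !gm_tc /= => /eqP; rewrite tofrac_eq => /eqP /polyC_inj. Qed.

Lemma uK_neq0 : uK != 0.
Proof. by rewrite /uK tofrac_eq0 polyC_eq0 polyX_eq0. Qed.
Lemma vK_neq0 : vK != 0.
Proof. by rewrite /vK tofrac_eq0 polyX_eq0. Qed.

Definition rev (e : nat) (p : {poly int}) : {poly int} := \poly_(i < e.+1) p`_(e - i).

Lemma gm_wide a (p : {poly int}) n : (size p <= n)%N ->
  gm a p = \sum_(i < n) (p`_i)%:~R * a ^+ i.
Proof.
move=> sp; rewrite /= horner_evalE (@horner_coef_wide _ n).
  by apply: eq_bigr => i _; rewrite coef_map.
exact: leq_trans (size_poly _ _) sp.
Qed.

Lemma revE (e : nat) (p : {poly int}) (t : Kuv) : t != 0 -> (size p <= e.+1)%N ->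
  t ^+ e * gm t^-1 p = gm t (rev e p).
Proof.
move=> t0 sp; rewrite (@gm_wide _ _ _ sp) (@gm_wide _ _ _ (size_poly _ _)).
rewrite mulr_sumr (reindex_inj rev_ord_inj) /=; apply: eq_bigr => i _.
rewrite coef_poly subSS ltn_ord.
have lie : (i <= e)%N by rewrite -ltnS.
rewrite mulrCA.
have E : t ^+ e * t^-1 ^+ (e - i) = t ^+ i.
  rewrite exprVn.
  have -> : t ^+ e = t ^+ i * t ^+ (e - i) by rewrite -exprD subnKC.
  rewrite mulfK; first by [].
  exact: expf_neq0.
by rewrite E.
Qed.

Lemma coef_trunc e q j : (trunc_half e q)`_j = if (j.*2 < e)%N then q`_j else 0.
Proof.
rewrite /trunc_half coef_poly; case: ltnP => // hj.
by rewrite nth_default //; case: ifP.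
Qed.

Lemma size_trunc e q : (size (trunc_half e q) <= size q)%N.
Proof. exact: size_poly. Qed.

Lemma antisym_trunc (e : nat) (p : {poly int}) : (size p <= e.+1)%N ->
  (forall t : Kuv, t != 0 -> t ^+ e * gm t^-1 p = - gm t p) ->
  forall t : Kuv, t != 0 ->
  t ^+ e * gm t^-1 (trunc_half e (- p)) = gm t (trunc_half e (- p)) + gm t p.
Proof.
move=> sp H t t0.
have Hr : rev e p = - p.
  apply: gm_inj; rewrite -revE; last exact: sp; last exact: uK_neq0.
  rewrite H; last exact: uK_neq0.
  by rewrite rmorphN.
have hc : forall i, (i <= e)%N -> p`_(e - i) = - p`_i.
  move=> i lie; have := congr1 (fun q : {poly int} => q`_i) Hr.
  by rewrite /= coef_poly ltnS lie coefN.
have hz : forall i, (e < i)%N -> p`_i = 0.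
  by move=> i li; rewrite nth_default // (leq_trans sp).
have Hg : rev e (trunc_half e (- p)) = trunc_half e (- p) + p.
  apply/polyP => i; rewrite coef_poly coefD !coef_trunc !coefN ltnS.
  case: (leqP i e) => lie.
    case: (ltngtP (i.*2) e) => h2.
    - rewrite ifF; last by apply/negbTE; rewrite -leqNgt; lia.
      by rewrite addNr.
    - rewrite ifT; last by lia.
      by rewrite hc // opprK add0r.
    - rewrite ifF; last by apply/negbTE; rewrite -leqNgt; lia.
      rewrite add0r.
      have := hc i lie; have -> : (e - i = i)%N by lia.
      move=> /eqP; rewrite -subr_eq0 opprK -mulr2n mulrn_eq0 /= => /eqP ->//.
  rewrite ifF; last by apply/negbTE; rewrite -leqNgt; lia.
  by rewrite hz // add0r.
rewrite revE; last first.
  by rewrite (leq_trans (size_trunc _ _)) // size_opp.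
  exact: t0.
by rewrite Hg rmorphD.
Qed.

Lemma expVB (t : Kuv) m n : t != 0 -> (m <= n)%N -> t ^+ n * t^-1 ^+ m = t ^+ (n - m).
Proof.
move=> t0 lmn; rewrite exprVn.
have -> : t ^+ n = t ^+ (n - m) * t ^+ m by rewrite -exprD subnK.
rewrite mulfK; first by [].
exact: expf_neq0.
Qed.

Lemma evm_wide a b (q : Zuv) n : (size q <= n)%N ->
  evm a b q = \sum_(j < n) gm a q`_j * b ^+ j.
Proof.
move=> sq; rewrite /= horner_evalE (@horner_coef_wide _ n).
  by apply: eq_bigr => i _; rewrite coef_map.
exact: leq_trans (size_poly _ _) sq.
Qed.

Lemma evm_poly a b n (E : nat -> {poly int}) :
  evm a b (\poly_(i < n) E i) = \sum_(i < n) gm a (E i) * b ^+ i.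
Proof.
rewrite poly_def rmorph_sum; apply: eq_bigr => i _.
by rewrite -mul_polyC rmorphM evmC rmorphXn evmX.
Qed.

Lemma gm_scaleXn a (c : int) k : gm a (c *: 'X^k) = c%:~R * a ^+ k.
Proof. by rewrite -mul_polyC rmorphM gmC rmorphXn gmX. Qed.

Definition okp (e : nat) (p : Zuv) := ((size p).-1.*2 < e)%N || (size p <= 1)%N.

Lemma okpM a b (p q : Zuv) : okp a p -> okp b q -> okp (a + b) (p * q).
Proof.
rewrite /okp => /orP hp /orP hq; apply/orP.
have := size_mul_leq p q; lia.
Qed.

Lemma okpD e (p q : Zuv) : okp e p -> okp e q -> okp e (p + q).
Proof.
rewrite /okp => /orP hp /orP hq; apply/orP.
have := size_polyD p q; lia.
Qed.

Lemma okpN e (p : Zuv) : okp e p -> okp e (- p).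
Proof. by rewrite /okp size_polyN. Qed.

Lemma okp0 e : okp e 0.
Proof. by rewrite /okp size_poly0 orbT. Qed.

Lemma okp_sum e (I : finType) (Q : pred I) (F : I -> Zuv) :
  (forall i, Q i -> okp e (F i)) -> okp e (\sum_(i | Q i) F i).
Proof.
move=> H; apply: (big_ind (okp e)) => //; [exact: okp0 | exact: okpD].
Qed.

Lemma okp_coef e (p : Zuv) : (0 < e)%N -> (forall j, (e <= j.*2)%N -> p`_j = 0) -> okp e p.
Proof.
move=> e0 H; rewrite /okp; case: (leqP (size p) 1) => hs; first by rewrite orbT.
apply/orP; left; rewrite ltnNge; apply/negP => h.
have := H _ h; rewrite -/(lead_coef p) => /eqP; rewrite lead_coef_eq0 => /eqP p0.
by move: hs; rewrite p0 size_poly0.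
Qed.

Definition hmg (m : nat) (g : {poly int}) : Zuv :=
  \poly_(i < m.+1) (g`_i *: 'X^(m - i) : {poly int}).
Definition dg (m : nat) (g : {poly int}) : Zuv :=
  \poly_(i < m.+1) (g`_i *: 'X^i : {poly int}).

Lemma evm_hmg (a b : Kuv) m (g : {poly int}) : a != 0 -> (size g <= m.+1)%N ->
  evm a b (hmg m g) = a ^+ m * gm (a^-1 * b) g.
Proof.
move=> a0 sg; rewrite evm_poly (@gm_wide _ _ _ sg) mulr_sumr.
apply: eq_bigr => i _; rewrite gm_scaleXn exprMn.
have lim : (i <= m)%N by rewrite -ltnS.
rewrite -(expVB _ _ _ a0 lim).
by rewrite mulrCA !mulrA.
Qed.

Lemma evm_dg (a b : Kuv) m (g : {poly int}) : (size g <= m.+1)%N -> evm a b (dg m g) = gm (a * b) g.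
Proof.
move=> sg; rewrite evm_poly (@gm_wide _ _ _ sg).
by apply: eq_bigr => i _; rewrite gm_scaleXn exprMn mulrA.
Qed.

Lemma okp_hmg m (g : {poly int}) : (forall i, (0 < m)%N -> (m <= i.*2)%N -> g`_i = 0) -> okp m (hmg m g).
Proof.
move=> H; case: m H => [|m] H.
  by rewrite /okp (size_poly 1) orbT.
apply: okp_coef => // j hj; rewrite coef_poly H // scale0r; by case: ifP.
Qed.

Lemma okp_dg m (g : {poly int}) : (forall i, (0 < m)%N -> (m <= i.*2)%N -> g`_i = 0) -> okp m (dg m g).
Proof.
move=> H; case: m H => [|m] H.
  by rewrite /okp (size_poly 1) orbT.
apply: okp_coef => // j hj; rewrite coef_poly H // scale0r; by case: ifP.
Qed.

Lemma lemL (e : nat) (q : Zuv) : (0 < e)%N -> okp e q ->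
  evm uK vK q = (uK * vK) ^+ e * evm uK^-1 vK^-1 q -> q = 0.
Proof.
move=> e0 ok H; apply/eqP; apply/negP => qn0.
have hs : ((size q).-1.*2 < e)%N by move: ok; rewrite /okp; lia.
set s := size q in hs.
set M := \max_(j < s) size (nth (0%R : {poly int}) q j).
have hM : forall j, (size (nth 0%R q j) <= M)%N.
  move=> j; case: (ltnP j s) => hj.
    exact: (@leq_bigmax _ (fun j : 'I_s => size (nth (0%R : {poly int}) q j)) (Ordinal hj)).
  by rewrite nth_default ?size_poly0.

set Q : Zuv := \sum_(j < s) (rev (M + e)%N q`_j)%:P * 'X^(e - j).
have EQ : evm uK vK Q = evm uK vK (('X : {poly int})%:P ^+ M * q).
  rewrite /Q rmorph_sum [RHS]rmorphM rmorphXn evmC gmX H mulrA.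
  rewrite (@evm_wide uK^-1 vK^-1 q s) // mulr_sumr.
  apply: eq_bigr => j _.
  have hj : (j <= e)%N by have := ltn_ord j; rewrite -/s; lia.
  rewrite rmorphM evmC rmorphXn evmX -revE; last first.
    by rewrite (leq_trans (hM j)) // -addnS leq_addr.
    exact: uK_neq0.
  rewrite -(expVB _ _ _ vK_neq0 hj) exprD exprMn.
  by rewrite -!mulrA (mulrCA (gm _ _)).

have EQ2 := evm_inj _ _ EQ.
have := congr1 (fun p : Zuv => p`_(s.-1)) EQ2.
rewrite /= coef_sum -rmorphXn coefCM big1; last first.
  move=> j _; rewrite coefMXn ifT //.
  have := ltn_ord j; lia.
move=> /esym /eqP; rewrite mulf_eq0 expf_eq0 polyX_eq0 andbF /=.
by rewrite -/(lead_coef q) lead_coef_eq0 => hq; apply: qn0.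
Qed.

Set Implicit Arguments. Unset Strict Implicit. Unset Printing Implicit Defensive.
Section Main.
Variables (d : Order.disp_t) (P : finTBPOrderType d) (rho : P -> nat).
Hypothesis HE : eulerian rho.

Definition ivl (x y : P) := [set w | (x < w)%O && (w <= y)%O].

Lemma ivl_gt0 (x y : P) : (x < y)%O -> (0 < #|ivl x y|)%N.
Proof. by move=> xy; apply/card_gt0P; exists y; rewrite inE xy lexx. Qed.

Lemma ivl_sub (x z y : P) : (x < z)%O -> (z <= y)%O -> (#|ivl z y| < #|ivl x y|)%N.
Proof.
move=> xz zy; apply: proper_card; apply/properP; split.
  apply/subsetP => w; rewrite /ivl !inE => /andP[zw wy].
  by rewrite wy andbT (lt_trans xz zw).
by exists z; rewrite /ivl !inE ?ltxx //= xz zy.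
Qed.

Lemma ivl_sub2 (x w y : P) : (x < w)%O -> (w < y)%O -> (#|ivl x w| < #|ivl x y|)%N.
Proof.
move=> xw wy; apply: proper_card; apply/properP; split.
  apply/subsetP => v; rewrite /ivl !inE => /andP[xv vw].
  by rewrite xv (le_trans vw (ltW wy)).
by exists y; rewrite /ivl !inE ?lexx ?andbT ?(lt_trans xw wy) ?(lt_geF wy) ?andbF.
Qed.

Lemma cov_ex n : forall x y : P, (#|ivl x y| <= n)%N -> (x < y)%O ->
  exists z, covers x z && (z <= y)%O.
Proof.
elim: n => [|n IH] x y hc xy.
  by have := ivl_gt0 xy; rewrite ltnNge hc.
case hcov: (covers x y); first by exists y; rewrite lexx andbT.
move: hcov; rewrite /covers xy /= => /negbT; rewrite negb_forall => /existsP[w].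
rewrite negbK => /andP[xw wy].
have hc' : (#|ivl x w| <= n)%N.
  by rewrite -ltnS (leq_trans (ivl_sub2 xw wy) hc).
have [z /andP[cz zw]] := IH x w hc' xw.
by exists z; apply/andP; split; [exact: cz | exact: le_trans zw (ltW wy)].
Qed.

Lemma rank_lt n : forall x y : P, (#|ivl x y| <= n)%N -> (x < y)%O ->
  (rho x < rho y)%N /\ (rho y - rho x <= #|ivl x y|)%N.
Proof.
elim: n => [|n IH] x y hc xy.
  by have := ivl_gt0 xy; rewrite ltnNge hc.
have [z /andP[cz zy]] := cov_ex (leqnn _) xy.
have rz : rho z = (rho x).+1 by case: HE => [[_ Hc] _]; exact: Hc.
have cpos := ivl_gt0 xy.
have xz : (x < z)%O by move: cz => /andP[].
case: (eqVneq z y) => [ezy|zny].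
  by subst y; rewrite rz; split; lia.
have zy' : (z < y)%O by rewrite lt_neqAle zny zy.
have hcz := ivl_sub xz zy.
have [h1 h2] := IH z y (leq_trans hcz hc) zy'.
split; lia.
Qed.

Lemma rho_lt (x y : P) : (x < y)%O -> (rho x < rho y)%N.
Proof. by move=> xy; case: (rank_lt (leqnn _) xy). Qed.

Lemma rho_le (x y : P) : (x <= y)%O -> (rho x <= rho y)%N.
Proof.
by rewrite le_eqVlt => /orP[/eqP->//|/rho_lt/ltnW].
Qed.

Lemma r_card (x y : P) : (x <= y)%O -> (rho y - rho x < #|P|)%N.
Proof.
rewrite le_eqVlt => /orP[/eqP->|xy]; first by rewrite subnn; apply/card_gt0P; exists x.
have [_ h] := rank_lt (leqnn _) xy.
apply: (leq_ltn_trans h); rewrite -cardsT; apply: proper_card; rewrite properT.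
apply/eqP => E; have : x \in ivl x y by rewrite E inE.
by rewrite inE ltxx.
Qed.


Lemma mob_stable n : forall m (x y : P), (x <= y)%O -> (rho y - rho x < n)%N ->
  (rho y - rho x < m)%N -> mobius_rec n x y = mobius_rec m x y.
Proof.
elim: n => [|n IH] m x y xy h1 h2; first by rewrite ltn0 in h1.
case: m h2 => [|m] h2; first by rewrite ltn0 in h2.
rewrite /=; case: eqP => // /eqP xny; rewrite xy; congr (- _).
apply: eq_bigr => z /andP[xz zy]; apply: IH => //.
  by have := rho_lt zy; have := rho_le xz; have := rho_le xy; lia.
by have := rho_lt zy; have := rho_le xz; have := rho_le xy; lia.
Qed.

Lemma euler_sum (x y : P) : (x < y)%O ->
  \sum_(z : P | (x <= z)%O && (z <= y)%O) ((-1) ^+ (rho z - rho x) : int) = 0.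
Proof.
move=> xy.
have hm : mobius x y = (-1) ^+ (rho y - rho x) by case: HE => _ H; apply: H; exact: ltW.
have hP : #|P| = #|P|.-1.+1 by rewrite prednK //; apply/card_gt0P; exists x.
move: hm; rewrite /mobius hP /= (lt_eqF xy) (ltW xy) => hm.
rewrite (bigD1 y) /=; last by rewrite (ltW xy) lexx.
have E : \sum_(z | ((x <= z)%O && (z <= y)%O) && (z != y)) ((-1) ^+ (rho z - rho x) : int)
     = \sum_(z | (x <= z)%O && (z < y)%O) mobius_rec #|P|.-1 x z.
  apply: eq_big => z.
    by rewrite lt_neqAle; case: (x <= z)%O; case: (z <= y)%O; case: (z != y).
  move=> /andP[/andP[xz zy] zny].
  have zy' : (z < y)%O by rewrite lt_neqAle zny zy.
  have hxy := r_card (ltW xy).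
  rewrite (@mob_stable _ #|P|) //.
    by case: HE => _ H; rewrite -H.
  by have := rho_lt zy'; have := rho_le xz; lia.
  by have := rho_lt zy'; have := rho_le xz; lia.
by rewrite E -hm addNr.
Qed.

Lemma euler_sumR (R : pzRingType) (x y : P) : (x < y)%O ->
  \sum_(z : P | (x <= z)%O && (z <= y)%O) ((-1) ^+ (rho z - rho x) : R) = 0.
Proof.
move=> xy; have := congr1 (fun k : int => (k%:~R : R)) (euler_sum xy).
rewrite /= rmorph_sum /=.
under eq_bigr do rewrite rmorphXn rmorphN1.
by [].
Qed.


Local Notation r x y := (rho y - rho x)%N.

Lemma Hrec0 n (x y : P) : r x y = 0%N -> Hrec rho n x y = 1.
Proof. by case: n => [|n] /= ->. Qed.

Lemma Brec0 n (x y : P) : r x y = 0%N -> Brec rho n x y = 1.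
Proof. by case: n => [|n] /= ->. Qed.

Lemma Hrec_stable n : forall m (x y : P), (r x y <= n)%N -> (r x y <= m)%N ->
  Hrec rho n x y = Hrec rho m x y.
Proof.
elim: n => [|n IH] m x y h1 h2.
  by rewrite !Hrec0 //; lia.
case: m h2 => [|m] h2.
  by rewrite !Hrec0 //; lia.
rewrite /=; case: eqP => // rn0.
apply: eq_bigr => z /andP[xz zy]; case: eqP => // rzy.
have := rho_lt xz; have := rho_le zy => h3 h4.
by rewrite (IH m) //; lia.
Qed.

Lemma card_pos : (0 < #|P|)%N.
Proof. by apply/card_gt0P; exists \bot%O. Qed.

Lemma Gpoly0 (x y : P) : r x y = 0%N -> Gpoly rho x y = 1.
Proof. by rewrite /Gpoly => ->. Qed.

Lemma GpolyE (x y : P) : r x y != 0%N ->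
  Gpoly rho x y = trunc_half (r x y) ((1 - 'X) * Hpoly rho x y).
Proof. by rewrite /Gpoly => /negbTE ->. Qed.

Lemma HpolyE (x y : P) : (x <= y)%O -> r x y != 0%N ->
  Hpoly rho x y = \sum_(z | (x < z)%O && (z <= y)%O) ('X - 1) ^+ (r x z).-1 * Gpoly rho z y.
Proof.
move=> xy rn0; have hc := r_card xy.
rewrite {1}/Hpoly -[in Hrec _ #|P|](prednK card_pos) /= (negbTE rn0).
apply: eq_bigr => z /andP[xz zy]; congr (_ * _).
rewrite /Gpoly; case: eqP => // rzy.
rewrite /Hpoly (@Hrec_stable _ #|P|) //.
  by rewrite -ltnS (prednK card_pos); have := rho_lt xz; have := rho_le zy; lia.
by have := rho_lt xz; have := rho_le zy; lia.
Qed.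

Lemma Gcoef (x y : P) i : r x y != 0%N -> (r x y <= i.*2)%N -> (Gpoly rho x y)`_i = 0.
Proof.
by move=> rn0 hi; rewrite GpolyE // coef_trunc ltnNge hi.
Qed.

Lemma Gsize (x y : P) : (size (Gpoly rho x y) <= (r x y).+1)%N.
Proof.
case: (eqVneq (r x y) 0%N) => [r0|rn0].
  by rewrite Gpoly0 // size_poly1 r0.
apply/leq_sizeP => j hj; apply: Gcoef => //; lia.
Qed.

Lemma Brec_stable n : forall m (x y : P), (r x y <= n)%N -> (r x y <= m)%N ->
  Brec rho n x y = Brec rho m x y.
Proof.
elim: n => [|n IH] m x y h1 h2.
  by rewrite !Brec0 //; lia.
case: m h2 => [|m] h2.
  by rewrite !Brec0 //; lia.
rewrite /=; case: eqP => // rn0; congr (_ - _).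
apply: eq_bigr => z /andP[xz zy].
have := rho_lt zy; have := rho_le xz => h3 h4.
by rewrite (IH m) //; lia.
Qed.

Lemma Bfun0 (x y : P) : r x y = 0%N -> Bfun rho x y = 1.
Proof. exact: Brec0. Qed.

Lemma BfunE (x y : P) : (x <= y)%O -> r x y != 0%N ->
  Bfun rho x y = eval_t (Gpoly rho x y) (uK * vK) -
    \sum_(z | (x <= z)%O && (z < y)%O)
      Bfun rho x z * uK ^+ (r z y) * eval_t (Gpoly rho z y) (uK^-1 * vK).
Proof.
move=> xy rn0; have hc := r_card xy.
rewrite {1}/Bfun -[in Brec _ #|P|](prednK card_pos) /= (negbTE rn0); congr (_ - _).
apply: eq_bigr => z /andP[xz zy]; congr (_ * _ * _).
rewrite /Bfun (@Brec_stable _ #|P|) //.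
  by rewrite -ltnS (prednK card_pos); have := rho_lt zy; have := rho_le xz; lia.
by have := rho_lt zy; have := rho_le xz; lia.
Qed.

Lemma sum_low (R : nmodType) (x y : P) (F : P -> R) : (x <= y)%O ->
  \sum_(z | (x <= z)%O && (z <= y)%O) F z = F x + \sum_(z | (x < z)%O && (z <= y)%O) F z.
Proof.
move=> xy; rewrite (bigD1 x) /=; last by rewrite lexx xy.
congr (_ + _); apply: eq_bigl => z.
by rewrite lt_def; case: (x <= z)%O; case: (z <= y)%O; case: (z != x).
Qed.

Lemma sum_high (R : nmodType) (x y : P) (F : P -> R) : (x <= y)%O ->
  \sum_(z | (x <= z)%O && (z <= y)%O) F z = F y + \sum_(z | (x <= z)%O && (z < y)%O) F z.
Proof.
move=> xy; rewrite (bigD1 y) /=; last by rewrite lexx xy.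
congr (_ + _); apply: eq_bigl => z.
by rewrite lt_neqAle; case: (x <= z)%O; case: (z <= y)%O; case: (z != y).
Qed.

Lemma sum_one (R : nmodType) (x : P) (F : P -> R) :
  \sum_(z | (x <= z)%O && (z <= x)%O) F z = F x.
Proof.
rewrite (big_pred1 x) // => z /=; by rewrite -eq_le eq_sym.
Qed.

Lemma exch (R : nmodType) (A : pred P) (F : P -> P -> R) (y : P) :
  (forall z w, A z -> (z <= w)%O -> A w) ->
  \sum_(z | A z && (z <= y)%O) \sum_(w | (z <= w)%O && (w <= y)%O) F z w =
  \sum_(w | A w && (w <= y)%O) \sum_(z | A z && (z <= w)%O) F z w.
Proof.
move=> HA; rewrite (exchange_big_dep (fun w => A w && (w <= y)%O)) /=; last first.
  by move=> z w /andP[Az _] /andP[zw wy]; rewrite (HA z w) //.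
apply: eq_bigr => w /andP[Aw wy]; apply: eq_bigl => z.
apply/idP/idP => [/andP[/andP[Az _] /andP[zw _]]|/andP[Az zw]]; first by rewrite Az zw.
by rewrite Az zw wy (le_trans zw wy).
Qed.


Lemma KLS_step (x y : P) : (x < y)%O ->
  (forall z, (x < z)%O -> (z <= y)%O -> forall t : Kuv, t != 0 ->
     t ^+ r z y * gm t^-1 (Gpoly rho z y) =
     \sum_(w | (z <= w)%O && (w <= y)%O) (t - 1) ^+ r z w * gm t (Gpoly rho w y)) ->
  forall t : Kuv, t != 0 ->
  t ^+ r x y * gm t^-1 (Gpoly rho x y) =
  \sum_(z | (x <= z)%O && (z <= y)%O) (t - 1) ^+ r x z * gm t (Gpoly rho z y).
Proof.
move=> xy IH.
have rxy := rho_lt xy.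
set e := r x y.
have e0 : e != 0%N by rewrite /e; lia.
set Rp : {poly int} := \sum_(z | (x < z)%O && (z <= y)%O) ('X - 1) ^+ r x z * Gpoly rho z y.
have HG : Gpoly rho x y = trunc_half e (- Rp).
  rewrite GpolyE // HpolyE ?(ltW xy) // mulr_sumr /Rp -sumrN.
  congr trunc_half; apply: eq_bigr => z /andP[xz zy].
  have hz := rho_lt xz.
  rewrite mulrA -opprB mulNr -exprS prednK; first by rewrite mulNr.
  lia.
have sR : (size Rp <= e.+1)%N.
  apply: (big_ind (fun p : {poly int} => (size p <= e.+1)%N)).
  - by rewrite size_poly0.
  - by move=> p q hp hq; rewrite (leq_trans (size_polyD _ _)) // geq_max hp hq.
  - move=> z /andP[xz zy]; rewrite (leq_trans (size_mul_leq _ _)) //.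
    have -> : ('X - 1 : {poly int}) = 'X - 1%:P by rewrite polyC1.
    rewrite size_exp_XsubC addSn /=.
    have h3 := Gsize z y; have h1 := rho_lt xz; have h2 := rho_le zy.
    apply: (leq_trans (leq_add (leqnn _) h3)); rewrite /e; lia.
have gmR : forall s, gm s Rp =
    \sum_(z | (x < z)%O && (z <= y)%O) (s - 1) ^+ r x z * gm s (Gpoly rho z y).
  move=> s; rewrite rmorph_sum; apply: eq_bigr => z _.
  by rewrite rmorphM rmorphXn rmorphB gmX rmorph1.
have anti : forall s : Kuv, s != 0 -> s ^+ e * gm s^-1 Rp = - gm s Rp.
  move=> s s0; rewrite gmR gmR mulr_sumr.
  transitivity (\sum_(z | (x < z)%O && (z <= y)%O) (1 - s) ^+ r x z *
     \sum_(w | (z <= w)%O && (w <= y)%O) (s - 1) ^+ r z w * gm s (Gpoly rho w y)).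
    apply: eq_bigr => z /andP[xz zy].
    rewrite -(IH z xz zy s s0).
    have -> : e = (r x z + r z y)%N.
      by have := rho_lt xz; have := rho_le zy; rewrite /e; lia.
    rewrite exprD -mulrA (mulrCA (s ^+ r z y)) (mulrA (s ^+ r x z)) -exprMn mulrBr mulfV; last exact: s0.
    by rewrite mulr1.
  under eq_bigr do rewrite mulr_sumr.
  rewrite (@exch _ (fun z => (x < z)%O)); last by move=> z w xz zw; exact: lt_le_trans xz zw.
  rewrite -sumrN; apply: eq_bigr => w /andP[xw wy].
  transitivity ((\sum_(z | (x < z)%O && (z <= w)%O) ((-1) ^+ r x z : Kuv)) *
                ((s - 1) ^+ r x w * gm s (Gpoly rho w y))).
    rewrite mulr_suml; apply: eq_bigr => z /andP[xz zw].
    have -> : r x w = (r x z + r z w)%N.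
      by have := rho_lt xz; have := rho_le zw; lia.
    rewrite exprD (_ : 1 - s = -1 * (s - 1)); last by rewrite mulN1r opprB.
    by rewrite exprMn !mulrA.
  have := euler_sumR Kuv xw; rewrite sum_low ?(ltW xw) // subnn expr0 => /eqP.
  by rewrite addrC addr_eq0 => /eqP ->; rewrite mulN1r.
move=> t t0.
rewrite HG (antisym_trunc e Rp sR anti t t0) -HG gmR sum_low ?(ltW xy) //.
by rewrite subnn expr0 mul1r.
Qed.

Lemma KLS (x y : P) (t : Kuv) : (x <= y)%O -> t != 0 ->
  t ^+ r x y * gm t^-1 (Gpoly rho x y) =
  \sum_(z | (x <= z)%O && (z <= y)%O) (t - 1) ^+ r x z * gm t (Gpoly rho z y).
Proof.
suff H : forall n (x y : P), (r x y <= n)%N -> (x <= y)%O -> forall t : Kuv, t != 0 ->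
  t ^+ r x y * gm t^-1 (Gpoly rho x y) =
  \sum_(z | (x <= z)%O && (z <= y)%O) (t - 1) ^+ r x z * gm t (Gpoly rho z y).
  by move=> xy t0; exact: (H _ x y (leqnn _) xy t t0).
clear x y t; elim=> [|n IH] x y hn xy t t0.
  case: (eqVneq x y) => [exy|nxy].
    subst y; rewrite sum_one subnn !expr0 !mul1r Gpoly0 ?subnn //.
    have h : forall a, gm a 1 = 1 by move=> a; exact: rmorph1.
    by rewrite !h.
  have xy' : (x < y)%O by rewrite lt_neqAle nxy xy.
  by have := rho_lt xy'; lia.
case: (eqVneq x y) => [exy|nxy].
  subst y; rewrite sum_one subnn !expr0 !mul1r Gpoly0 ?subnn //.
  have h : forall a, gm a 1 = 1 by move=> a; exact: rmorph1.
  by rewrite !h.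
have xy' : (x < y)%O by rewrite lt_neqAle nxy xy.
apply: KLS_step => // z xz zy s s0; apply: IH => //.
by have := rho_lt xz; have := rho_le zy; have := rho_lt xy'; lia.
Qed.


Variable B' : P -> P -> Zuv.
Hypothesis hB1 : forall x : P, B' x x = 1.
Hypothesis hB2 : forall x y : P, (x < y)%O -> ((size (B' x y)).-1.*2 < rho y - rho x)%N.
Hypothesis hB3 : forall x y : P, (x <= y)%O ->
     \sum_(z : P | (x <= z)%O && (z <= y)%O)
        eval_uv uK^-1 vK^-1 (B' x z) * (uK * vK) ^+ (rho z - rho x)%N
          * (vK - uK) ^+ (rho y - rho z)%N
     = \sum_(z : P | (x <= z)%O && (z <= y)%O)
        eval_uv uK vK (B' z y) * (uK * vK - 1) ^+ (rho z - rho x)%N.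

Local Notation ev := (evm uK vK).
Local Notation evb := (evm uK^-1 vK^-1).

Definition Gam (z y : P) : Kuv := uK ^+ r z y * gm (uK^-1 * vK) (Gpoly rho z y).

Definition Dp (x y : P) : Zuv :=
  \sum_(z | (x <= z)%O && (z <= y)%O) B' x z * hmg (r z y) (Gpoly rho z y)
  - dg (r x y) (Gpoly rho x y).

Lemma evD (x y : P) : ev (Dp x y) =
  \sum_(z | (x <= z)%O && (z <= y)%O) ev (B' x z) * Gam z y - gm (uK * vK) (Gpoly rho x y).
Proof.
rewrite rmorphB rmorph_sum evm_dg ?Gsize //; congr (_ - _).
apply: eq_bigr => z _; rewrite rmorphM evm_hmg ?Gsize //.
exact: uK_neq0.
Qed.

Lemma r_add (x z y : P) : (x <= z)%O -> (z <= y)%O -> r x y = (r x z + r z y)%N.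
Proof. by move=> xz zy; have := rho_le xz; have := rho_le zy; lia. Qed.

Lemma okB (x z : P) : (x <= z)%O -> okp (r x z) (B' x z).
Proof.
rewrite le_eqVlt => /orP[/eqP<-|xz]; first by rewrite hB1 /okp size_poly1 orbT.
by rewrite /okp hB2.
Qed.

Lemma okD (x y : P) : (x <= y)%O -> okp (r x y) (Dp x y).
Proof.
move=> xy; apply: okpD; last first.
  by apply: okpN; apply: okp_dg => i r0 hi; apply: Gcoef => //; rewrite -lt0n.
apply: okp_sum => z /andP[xz zy]; rewrite (r_add xz zy); apply: okpM; first exact: okB.
by apply: okp_hmg => i r0 hi; apply: Gcoef => //; rewrite -lt0n.
Qed.

Lemma UVneq0 : uK * vK != 0.
Proof. exact: mulf_neq0 uK_neq0 vK_neq0. Qed.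

Lemma tneq0 : uK^-1 * vK != 0.
Proof. by apply: mulf_neq0; [rewrite invr_eq0; exact: uK_neq0 | exact: vK_neq0]. Qed.

Lemma barGm (x y : P) : (x <= y)%O ->
  (uK * vK) ^+ r x y * evb (dg (r x y) (Gpoly rho x y)) =
  \sum_(z | (x <= z)%O && (z <= y)%O) (uK * vK - 1) ^+ r x z * gm (uK * vK) (Gpoly rho z y).
Proof.
move=> xy; rewrite evm_dg ?Gsize // -invfM.
exact: (KLS xy UVneq0).
Qed.

Lemma barGam (z y : P) : (z <= y)%O ->
  (uK * vK) ^+ r z y * evb (hmg (r z y) (Gpoly rho z y)) =
  \sum_(w | (z <= w)%O && (w <= y)%O) (vK - uK) ^+ r z w * Gam w y.
Proof.
move=> zy; rewrite evm_hmg ?Gsize //; last by rewrite invr_eq0; exact: uK_neq0.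
have hk := KLS zy tneq0.
have E1 : (uK * vK) ^+ r z y * uK^-1 ^+ r z y = uK ^+ r z y * (uK^-1 * vK) ^+ r z y.
  by rewrite !exprMn mulrAC mulrA.
have E2 : uK^-1^-1 / vK = (uK^-1 * vK)^-1 by rewrite invfM invrK mulrC.
rewrite mulrA E1 -mulrA E2 hk mulr_sumr.
apply: eq_bigr => w /andP[zw wy].
have E3 : vK - uK = uK * (uK^-1 * vK - 1).
  by rewrite mulrBr mulr1 mulrA (mulfV uK_neq0) mul1r.
rewrite /Gam (r_add zw wy) exprD E3 exprMn.
by rewrite -!mulrA (mulrCA (uK ^+ r w y)).
Qed.


Lemma gm1 a : gm a 1 = 1.
Proof. exact: rmorph1. Qed.

Lemma key_step (x y : P) : (x < y)%O ->
  (forall z, (x < z)%O -> (z <= y)%O -> ev (Dp z y) = 0) ->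
  ev (Dp x y) = (uK * vK) ^+ r x y * evb (Dp x y).
Proof.
move=> xy IH; have xy' := ltW xy.
symmetry.
rewrite /Dp rmorphB rmorph_sum mulrBr mulr_sumr (barGm xy').
have S1 : \sum_(z | (x <= z)%O && (z <= y)%O)
     (uK * vK) ^+ r x y * evb (B' x z * hmg (r z y) (Gpoly rho z y)) =
   \sum_(z | (x <= z)%O && (z <= y)%O) (uK * vK - 1) ^+ r x z *
      \sum_(w | (z <= w)%O && (w <= y)%O) ev (B' z w) * Gam w y.
  transitivity (\sum_(z | (x <= z)%O && (z <= y)%O)
     \sum_(w | (z <= w)%O && (w <= y)%O)
        (evb (B' x z) * (uK * vK) ^+ r x z) * ((vK - uK) ^+ r z w * Gam w y)).
    apply: eq_bigr => z /andP[xz zy]; rewrite -mulr_sumr -(barGam zy) rmorphM.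
    rewrite (r_add xz zy) exprD.
    by rewrite mulrACA (mulrC ((uK * vK) ^+ r x z)).
  rewrite (@exch _ (fun z => (x <= z)%O)); last by move=> z w xz zw; exact: le_trans xz zw.
  transitivity (\sum_(w | (x <= w)%O && (w <= y)%O)
     \sum_(z | (x <= z)%O && (z <= w)%O) (uK * vK - 1) ^+ r x z * (ev (B' z w) * Gam w y)).
    apply: eq_bigr => w /andP[xw wy].
    transitivity ((\sum_(z | (x <= z)%O && (z <= w)%O)
       evb (B' x z) * (uK * vK) ^+ r x z * (vK - uK) ^+ r z w) * Gam w y).
      by rewrite mulr_suml; apply: eq_bigr => z _; rewrite !mulrA.
    have h3 : \sum_(z | (x <= z)%O && (z <= w)%O)
        evb (B' x z) * (uK * vK) ^+ r x z * (vK - uK) ^+ r z w =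
      \sum_(z | (x <= z)%O && (z <= w)%O) ev (B' z w) * (uK * vK - 1) ^+ r x z.
      exact: hB3 xw.
    rewrite h3 mulr_suml; apply: eq_bigr => z _.
    by rewrite -mulrA mulrCA.
  rewrite -(@exch _ (fun z => (x <= z)%O)); last by move=> z w xz zw; exact: le_trans xz zw.
  by apply: eq_bigr => z _; rewrite mulr_sumr.
rewrite S1 -sumrB.
transitivity (\sum_(z | (x <= z)%O && (z <= y)%O) (uK * vK - 1) ^+ r x z * ev (Dp z y)).
  by apply: eq_bigr => z _; rewrite evD mulrBr.
rewrite sum_low // subnn expr0 mul1r big1 ?addr0 //.
by move=> z /andP[xz zy]; rewrite IH // mulr0.
Qed.

Lemma Dzero n : forall x y : P, (r x y <= n)%N -> (x <= y)%O -> ev (Dp x y) = 0.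
Proof.
elim: n => [|n IH] x y hn xy; case: (eqVneq x y) => [exy|nxy].
- subst y; rewrite evD sum_one hB1 rmorph1 mul1r /Gam subnn expr0 mul1r.
  by rewrite Gpoly0 ?subnn // !gm1 subrr.
- have xy' : (x < y)%O by rewrite lt_neqAle nxy xy.
  by have := rho_lt xy'; lia.
- subst y; rewrite evD sum_one hB1 rmorph1 mul1r /Gam subnn expr0 mul1r.
  by rewrite Gpoly0 ?subnn // !gm1 subrr.
have xy' : (x < y)%O by rewrite lt_neqAle nxy xy.
have rxy := rho_lt xy'.
have E := key_step xy' (fun z xz zy => IH z y ltac:(have := rho_lt xz; have := rho_le zy; lia) zy).
have e0 : (0 < r x y)%N by lia.
by rewrite (lemL _ _ e0 (okD xy) E) rmorph0.
Qed.

Lemma mainB (x y : P) : (x <= y)%O -> ev (B' x y) = Bfun rho x y.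
Proof.
move: {2}(r x y) (leqnn (r x y)) => n; elim: n x y => [|n IH] x y hn xy;
  case: (eqVneq x y) => [exy|nxy].
- by subst y; rewrite Bfun0 ?subnn // hB1 rmorph1.
- have xy' : (x < y)%O by rewrite lt_neqAle nxy xy.
  by have := rho_lt xy'; lia.
- by subst y; rewrite Bfun0 ?subnn // hB1 rmorph1.
have xy' : (x < y)%O by rewrite lt_neqAle nxy xy.
have rxy := rho_lt xy'.
have hD := Dzero (leqnn _) xy.
rewrite evD sum_high // /Gam subnn expr0 mul1r Gpoly0 ?subnn // gm1 mulr1 in hD.
move/eqP: hD; rewrite subr_eq0 => /eqP hD.
rewrite BfunE //; last by lia.
have ES : \sum_(z | (x <= z)%O && (z < y)%O)
     Bfun rho x z * uK ^+ r z y * eval_t (Gpoly rho z y) (uK^-1 * vK) =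
   \sum_(z | (x <= z)%O && (z < y)%O)
     ev (B' x z) * (uK ^+ r z y * gm (uK^-1 * vK) (Gpoly rho z y)).
  apply: eq_bigr => z /andP[xz zy].
  rewrite -IH //; last by have := rho_lt zy; have := rho_le xz; lia.
  by rewrite mulrA.
by rewrite gmE -hD ES addrK.
Qed.

End Main.

Theorem proposition2p12 (d : Order.disp_t) (P : finTBPOrderType d)
  (rho : P -> nat) (HE : eulerian rho) (B' : P -> P -> Zuv) :
  (forall x : P, B' x x = 1) ->
  (forall x y : P, (x < y)%O -> ((size (B' x y)).-1.*2 < rho y - rho x)%N) ->
  (forall x y : P, (x <= y)%O ->
     \sum_(z : P | (x <= z)%O && (z <= y)%O)
        eval_uv uK^-1 vK^-1 (B' x z) * (uK * vK) ^+ (rho z - rho x)%N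
          * (vK - uK) ^+ (rho y - rho z)%N
     = \sum_(z : P | (x <= z)%O && (z <= y)%O)
        eval_uv uK vK (B' z y) * (uK * vK - 1) ^+ (rho z - rho x)%N) ->
  forall x y : P, (x <= y)%O -> eval_uv uK vK (B' x y) = Bfun rho x y.
Proof.
move=> hB1 hB2 hB3 x y xy.
exact: (mainB HE hB1 hB2 hB3 xy).
Qed.
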